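(* Let $d$ be a square-free positive integer such that $E=\mathbb{Q}(\sqrt{-d})$ has class number at least $4$, and let $\mathcal{O}$ be its ring of integers. Let $\mathfrak{P}$ be a non-principal prime ideal of $\mathcal{O}$ and let $p$ be the prime number lying below $\mathfrak{P}$. Suppose $p\mid d$. Then for every positive integer $r\geq (p-1)d/p$, the unary Hermitian lattice $\mathfrak{P}v$, where $v$ spans a one-dimensional Hermitian space over $E$ with $h(v)=r/p$, is represented by $I_4$.
   Context: A Hermitian space is a finite-dimensional $E$-vector space with a map $h$ that is $E$-linear in the first argument and satisfies $h(v,w)=\overline{h(w,v)}$; $h(v):=h(v,v)$. $I_4$ is the Hermitian lattice $\mathcal{O}^4$ with $h(x,y)=\sum_{i=1}^4 x_i\overline{y_i}$. A lattice $L$ is represented by $I_4$ if there is an injective $\mathcal{O}$-linear map $L\to I_4$ preserving $h$. *)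

(* Defs.v *)
From HB Require Import structures.
From mathcomp Require Import all_boot all_order all_algebra all_field.
Set Implicit Arguments. Unset Strict Implicit. Unset Printing Implicit Defensive.
Import Order.TTheory GRing.Theory Num.Theory.
Local Open Scope ring_scope.

(* We work inside algC (algebraic complex numbers); complex conjugation x^*
   restricts to the nontrivial automorphism of E = Q(sqrt(-d)). *)

Definition squarefree (d : nat) : Prop :=
  forall q : nat, prime q -> ~~ (q * q %| d)%N.

Definition sqrt_md (d : nat) : algC := sqrtC (- (d%:R)).

Definition inE (d : nat) (x : algC) : Prop :=
  exists a b : rat, x = ratr a + ratr b * sqrt_md d.

Definition inO (d : nat) (x : algC) : Prop := inE d x /\ x \in Aint.

Definition ideal (d : nat) (I : algC -> Prop) : Prop :=
  [/\ forall x, I x -> inO d x,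
      I 0,
      forall x y, I x -> I y -> I (x + y)
    & forall a x, inO d a -> I x -> I (a * x)].

Definition nonzero_set (I : algC -> Prop) : Prop := exists x, I x /\ x != 0.

Definition scale_set (a : algC) (I : algC -> Prop) : algC -> Prop :=
  fun z => exists x, I x /\ z = a * x.

Definition ideal_equiv (d : nat) (I J : algC -> Prop) : Prop :=
  exists a b : algC, [/\ inO d a, inO d b, a != 0, b != 0 &
    forall z, scale_set a I z <-> scale_set b J z].

(* the class number of E is at least n: there are n pairwise inequivalent
   nonzero integral ideals (every ideal class has an integral representative) *)
Definition class_number_ge (d n : nat) : Prop :=
  exists Is : 'I_n -> (algC -> Prop),
    (forall i, ideal d (Is i) /\ nonzero_set (Is i)) /\
    (forall i j, i != j -> ~ ideal_equiv d (Is i) (Is j)).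

Definition prime_ideal (d : nat) (P : algC -> Prop) : Prop :=
  [/\ ideal d P, nonzero_set P, ~ P 1
    & forall a b, inO d a -> inO d b -> P (a * b) -> P a \/ P b].

Definition principal_ideal (d : nat) (P : algC -> Prop) : Prop :=
  exists a, inO d a /\ forall z, P z <-> scale_set a (inO d) z.

(* The unary Hermitian lattice P v with h(v) = c is represented by I_4:
   an injective O-linear map f : P v -> O^4 preserving h, written on the
   coefficient x of x v (x in P); h(x v, y v) = x * y^* * c. *)
Definition represented_by_I4 (d : nat) (P : algC -> Prop) (c : algC) : Prop :=
  exists f : algC -> 'I_4 -> algC,
    [/\ forall x, P x -> forall i, inO d (f x i),
        forall a b x y, inO d a -> inO d b -> P x -> P y ->
          forall i, f (a * x + b * y) i = a * f x i + b * f y i,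
        forall x y, P x -> P y -> (forall i, f x i = f y i) -> x = y
      & forall x y, P x -> P y ->
          \sum_(i < 4) f x i * (f y i)^* = x * (y^*) * c].

(* Main.v *)
Require Import Defs.
From HB Require Import structures.
From mathcomp Require Import all_boot all_order all_algebra all_field.
From mathcomp Require Import zify ring lra.
From Stdlib Require Import Classical.
Set Implicit Arguments. Unset Strict Implicit. Unset Printing Implicit Defensive.
Import Order.TTheory GRing.Theory Num.Theory.
Lemma sq_inj (p h x x' : nat) : prime p -> (h.*2 < p)%N -> (x <= h)%N -> (x' <= h)%N ->
  (p %| x ^ 2 - x' ^ 2)%N -> (x' <= x)%N -> x = x'.
Proof.
move=> pp hp xh x'h.
have p1 := prime_gt1 pp.
rewrite subn_sqr Euclid_dvdM // => /orP[] hd le.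
  case: (posnP (x - x')) => [z|pos]; first lia.
  have := dvdn_leq pos hd; lia.
case: (posnP (x + x')) => [z|pos]; first lia.
have := dvdn_leq pos hd; lia.
Qed.

Definition Fsq (p : nat) (pp : (0 < p)%N) (h : nat) (u : 'I_h.+1 + 'I_h.+1) : 'I_p :=
  match u with
  | inl x => Ordinal (ltn_pmod (x ^ 2) pp)
  | inr y => Ordinal (ltn_pmod ((p - 1) * (1 + y ^ 2)) pp)
  end.

Lemma sq_m1 (p : nat) : prime p -> odd p ->
  exists x y : nat, (p %| x ^ 2 + y ^ 2 + 1)%N /\ (x.*2 < p)%N /\ (y.*2 < p)%N.
Proof.
move=> pp op.
have p1 := prime_gt1 pp.
have p0 : (0 < p)%N by lia.
set h := p./2.
have hp : p = h.*2.+1 by rewrite /h -{1}(odd_double_half p) op add1n.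
have : exists u v : 'I_h.+1 + 'I_h.+1, u <> v /\ Fsq p0 u = Fsq p0 v.
  apply: NNPP => H.
  have inj : injective (Fsq p0 (h:=h)).
    move=> u v E; apply: NNPP => ne; by apply: H; exists u, v; split.
  have := @leq_card _ _ _ inj; rewrite card_sum !card_ord; lia.
move=> [u [v [ne E]]]; move/(congr1 val): E; case: u ne => [x|y]; case: v => [x'|y'] /= ne E.
- exfalso; apply: ne; congr inl; apply: val_inj => /=.
  wlog le : x x' E / (x' <= x)%N.
    move=> W; case: (leqP x' x) => l; first exact: W.
    by symmetry; apply: W => //; lia.
  have xh : (x <= h)%N := ltn_ord x.
  have x'h : (x' <= h)%N := ltn_ord x'.
  apply: (@sq_inj p h) => //; first lia.
  move/eqP: E; rewrite eqn_mod_dvd //; nia.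
- exists x, y'; split; last by split; [have := ltn_ord x | have := ltn_ord y']; lia.
  have : ((x ^ 2 + (1 + y' ^ 2)) %% p = 0)%N.
    rewrite -modnDml E modnDml -{2}(mul1n (1 + y' ^ 2)) -mulnDl subnK; last lia.
    by rewrite modnMr.
  have -> : (x ^ 2 + y' ^ 2 + 1 = x ^ 2 + (1 + y' ^ 2))%N by lia.
  by rewrite /dvdn => ->.
- exists x', y; split; last by split; [have := ltn_ord x' | have := ltn_ord y]; lia.
  have : ((x' ^ 2 + (1 + y ^ 2)) %% p = 0)%N.
    rewrite -modnDml -E modnDml -{2}(mul1n (1 + y ^ 2)) -mulnDl subnK; last lia.
    by rewrite modnMr.
  have -> : (x' ^ 2 + y ^ 2 + 1 = x' ^ 2 + (1 + y ^ 2))%N by lia.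
  by rewrite /dvdn => ->.
- exfalso; apply: ne; apply: f_equal; apply: val_inj => /=.
  wlog le : y y' E / (y' <= y)%N.
    move=> W; case: (leqP y' y) => l; first exact: W.
    by symmetry; apply: W => //; lia.
  have yh : (y <= h)%N := ltn_ord y.
  have y'h : (y' <= h)%N := ltn_ord y'.
  apply: (@sq_inj p h) => //; first lia.
  have cp : coprime p (p - 1).
    rewrite prime_coprime //; apply/negP => /dvdn_leq; lia.
  rewrite -(Gauss_dvdr _ cp) -(subnDl 1 (y ^ 2) (y' ^ 2)) mulnBr.
  move/eqP: E; rewrite eqn_mod_dvd; first by [].
  apply: leq_mul => //; nia.
Qed.

Local Open Scope ring_scope.

Definition is4sq (n : int) : Prop :=
  exists a b c e : int, n = a*a + b*b + c*c + e*e.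

Lemma euler4 (a b c d e f g h : int) :
  (a*a+b*b+c*c+d*d)*(e*e+f*f+g*g+h*h) =
  (a*e+b*f+c*g+d*h)^+2 + (a*f-b*e+c*h-d*g)^+2 + (a*g-b*h-c*e+d*f)^+2 + (a*h+b*g-c*f-d*e)^+2.
Proof. ring. Qed.

Lemma is4sqM m n : is4sq m -> is4sq n -> is4sq (m * n).
Proof.
move=> [a [b [c [d ->]]]] [e [f [g [h ->]]]].
rewrite euler4; do 4 eexists; rewrite !expr2; reflexivity.
Qed.

Lemma round_div (x : int) (m : int) : 0 < m ->
  exists q y : int, x = m * q + y /\ - m < 2 * y /\ 2 * y <= m.
Proof.
move=> m0.
have := divz_eq x m; have := modz_ge0 x (lt0r_neq0 m0); have := ltz_pmod x m0.
set q := (x %/ m)%Z; set y := (x %% m)%Z => h1 h2 h3.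
case: (lerP (2 * y) m) => hy.
  exists q, y; split; first by rewrite h3 mulrC.
  split => //; lia.
exists (q + 1), (y - m); split; first by rewrite h3; ring.
split; lia.
Qed.

Lemma sq_bound (y m : int) : - m < 2 * y -> 2 * y <= m -> 4 * (y * y) <= m * m.
Proof. move=> h1 h2; nia. Qed.

Lemma no_mid_div (p m : nat) (K : int) : prime p -> (1 < m)%N -> (m < p)%N ->
  p%:Z = m%:Z * K -> False.
Proof.
move=> pp m1 mp E.
have K0 : 0 <= K by nia.
have [k Ek] : exists k : nat, K = k%:Z by exists `|K|%N; rewrite gez0_abs.
move: E; rewrite Ek -PoszM => /eqP; rewrite eqz_nat => /eqP E.
have : (m %| p)%N by rewrite E dvdn_mulr.
have m1' : m != 1%N by lia.
move/(prime_nt_dvdP pp m1'); lia.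
Qed.

Lemma sq_mid (y m : int) : - m < 2 * y -> 4 * (y * y) = m * m -> 2 * y = m.
Proof.
move=> h1 h2.
have : (2 * y - m) * (2 * y + m) = 0.
  have -> : (2 * y - m) * (2 * y + m) = 4 * (y * y) - m * m by ring.
  by rewrite h2 subrr.
move/eqP; rewrite mulf_eq0 => /orP[]; rewrite ?subr_eq0 => /eqP //; lia.
Qed.

Lemma descent (p : nat) : prime p -> forall m : nat, (0 < m)%N -> (m < p)%N ->
  is4sq (m%:Z * p%:Z) -> is4sq p%:Z.
Proof.
move=> pp; elim/ltn_ind => m IH m0 mp [x1 [x2 [x3 [x4 E]]]].
have [m1|m1] := eqVneq m 1%N.
  by exists x1, x2, x3, x4; rewrite -E m1 mul1r.
have m1' : (1 < m)%N by lia.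
set M := m%:Z in E; set Pz := p%:Z in E.
have M0 : 0 < M by rewrite /M; lia.
have [q1 [y1 [ex1 [a1 b1]]]] := round_div x1 M0.
have [q2 [y2 [ex2 [a2 b2]]]] := round_div x2 M0.
have [q3 [y3 [ex3 [a3 b3]]]] := round_div x3 M0.
have [q4 [y4 [ex4 [a4 b4]]]] := round_div x4 M0.
subst x1 x2 x3 x4.
set r := Pz - 2 * ((M*q1+y1)*q1 + (M*q2+y2)*q2 + (M*q3+y3)*q3 + (M*q4+y4)*q4)
   + M * (q1*q1+q2*q2+q3*q3+q4*q4).
have Hy : y1*y1+y2*y2+y3*y3+y4*y4 = M * r.
  have -> : M * r = M * Pz - 2 * M * ((M*q1+y1)*q1 + (M*q2+y2)*q2 + (M*q3+y3)*q3 + (M*q4+y4)*q4)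
   + M * M * (q1*q1+q2*q2+q3*q3+q4*q4) by rewrite /r; ring.
  rewrite E; ring.
have s1 := sq_bound a1 b1; have s2 := sq_bound a2 b2.
have s3 := sq_bound a3 b3; have s4 := sq_bound a4 b4.
have sq0 (y : int) : 0 <= y * y by rewrite -expr2 sqr_ge0.
have := sq0 y1; have := sq0 y2; have := sq0 y3; have := sq0 y4 => z4 z3 z2 z1.
have r0 : 0 <= r by rewrite -(pmulr_rge0 _ M0) -Hy; lia.
have rM : r <= M by rewrite -(ler_pM2l M0); lia.
have [rz|rnz] := eqVneq r 0.
  have sqz (y : int) : y * y = 0 -> y = 0 by move/eqP; rewrite mulf_eq0 orbb => /eqP.
  rewrite rz mulr0 in Hy.
  have y10 : y1 = 0 by apply: sqz; lia.
  have y20 : y2 = 0 by apply: sqz; lia.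
  have y30 : y3 = 0 by apply: sqz; lia.
  have y40 : y4 = 0 by apply: sqz; lia.
  subst y1 y2 y3 y4.
  have : M * Pz = M * (M * (q1*q1+q2*q2+q3*q3+q4*q4)) by rewrite E; ring.
  move/(mulfI (lt0r_neq0 M0)) => /(no_mid_div pp m1' mp) [].
have [rMe|rMn] := eqVneq r M.
  rewrite rMe in Hy.
  have e1 : 2 * y1 = M by apply: sq_mid => //; lia.
  have e2 : 2 * y2 = M by apply: sq_mid => //; lia.
  have e3 : 2 * y3 = M by apply: sq_mid => //; lia.
  have e4 : 2 * y4 = M by apply: sq_mid => //; lia.
  have H4 : 4 * (M * Pz) = (2*M*q1 + 2*y1)^+2 + (2*M*q2 + 2*y2)^+2
     + (2*M*q3 + 2*y3)^+2 + (2*M*q4 + 2*y4)^+2 by rewrite E; ring.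
  rewrite e1 e2 e3 e4 in H4.
  have : (4 * M) * Pz = (4 * M) * (M * (q1*q1+q1+q2*q2+q2+q3*q3+q3+q4*q4+q4 + 1)).
    by rewrite -mulrA H4; ring.
  have M4 : 4 * M != 0 by lia.
  by move/(mulfI M4) => /(no_mid_div pp m1' mp).
set x1 := M*q1+y1 in E *; set x2 := M*q2+y2 in E *;
set x3 := M*q3+y3 in E *; set x4 := M*q4+y4 in E *.
set w1 := Pz - (x1*q1 + x2*q2 + x3*q3 + x4*q4).
set w2 := x1*q2 - x2*q1 + x3*q4 - x4*q3.
set w3 := x1*q3 - x2*q4 - x3*q1 + x4*q2.
set w4 := x1*q4 + x2*q3 - x3*q2 - x4*q1.
have Z1 : x1*y1+x2*y2+x3*y3+x4*y4 = M * w1.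
  by rewrite /w1 mulrBr E /x1 /x2 /x3 /x4; ring.
have Hw : (M * M) * (w1*w1+w2*w2+w3*w3+w4*w4) = (M * M) * (r * Pz).
  have -> : (M * M) * (r * Pz) = (M * Pz) * (y1*y1+y2*y2+y3*y3+y4*y4) by rewrite Hy; ring.
  rewrite E euler4 Z1 /w2 /w3 /w4 /x1 /x2 /x3 /x4; ring.
have MM : M * M != 0 by rewrite mulf_neq0 // lt0r_neq0.
move/(mulfI MM): Hw => Hw.
have rE : r = (`|r|%N)%:Z by rewrite gez0_abs.
apply: (IH `|r|%N); [rewrite /M in rM rMn; lia | lia | lia |].
by rewrite -rE; exists w1, w2, w3, w4.
Qed.

Lemma prime4 (p : nat) : prime p -> is4sq p%:Z.
Proof.
move=> pp; have p1 := prime_gt1 pp.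
case: (even_prime pp) => [->|op]; first by exists 1, 1, 0, 0.
have [x [y [hd [hx hy]]]] := sq_m1 pp op.
set k := ((x ^ 2 + y ^ 2 + 1) %/ p)%N.
have kE : (k * p = x ^ 2 + y ^ 2 + 1)%N by rewrite divnK.
apply: (@descent p pp k); [nia | nia |].
exists x%:Z, y%:Z, 1, 0.
have -> : (k%:Z * p%:Z = (k * p)%N%:Z)%R by rewrite PoszM.
rewrite kE; lia.
Qed.

Lemma all4 (n : nat) : is4sq n%:Z.
Proof.
elim/ltn_ind: n => n IH.
case: (ltnP 1 n) => n1; last first.
  case: n n1 {IH} => [|[|//]] _; first by exists 0, 0, 0, 0.
  by exists 1, 0, 0, 0.
have pp := pdiv_prime n1.
have nE : n = (pdiv n * (n %/ pdiv n))%N by rewrite mulnC divnK // pdiv_dvd.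
rewrite nE PoszM; apply: is4sqM; first exact: prime4.
apply: IH; apply: ltn_Pdiv; [exact: prime_gt1 | lia].
Qed.

Lemma frob (p m r : nat) : (0 < p)%N -> coprime p m -> ((p - 1) * m <= r)%N ->
  exists A B : nat, (p * A + m * B)%N = r.
Proof.
move=> p0 cp hr.
have [u [v uv]] := Bezoutz p m.
have g1 : gcdz p m = 1 by rewrite /gcdz /= (eqP cp).
rewrite g1 in uv.
have pz : (p%:Z != 0) by lia.
have := divz_eq (r%:Z * v) p%:Z; have := modz_ge0 (r%:Z * v) pz;
  have := @ltz_pmod (r%:Z * v) p%:Z (ltac:(lia)).
set q := ((r%:Z * v) %/ p%:Z)%Z; set B := ((r%:Z * v) %% p%:Z)%Z => h1 h2 h3.
set A := r%:Z * u + m%:Z * q.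
have E : p%:Z * A + m%:Z * B = r%:Z.
  have -> : m%:Z * B = m%:Z * (r%:Z * v) - m%:Z * (q * p%:Z) by rewrite h3; ring.
  rewrite /A -[RHS]mulr1 -uv; ring.
have A0 : 0 <= A.
  have mB : m%:Z * B <= m%:Z * (p%:Z - 1) by apply: ler_wpM2l; lia.
  have hr' : (p%:Z - 1) * m%:Z <= r%:Z.
    have -> : (p%:Z - 1) = (p - 1)%N%:Z by lia.
    by rewrite -PoszM lez_nat.
  have : 0 <= p%:Z * A.
    have -> : p%:Z * A = r%:Z - m%:Z * B by rewrite -E; ring.
    rewrite subr_ge0; apply: le_trans mB _; rewrite mulrC //.
  by rewrite pmulr_rge0 // ltz_nat.
exists `|A|%N, `|B|%N.
apply/eqP; rewrite -eqz_nat PoszD !PoszM !gez0_abs //; exact/eqP.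
Qed.

Lemma sqrt_md_sq d : sqrt_md d * sqrt_md d = - d%:R.
Proof. by rewrite -expr2 sqrtCK. Qed.

Lemma sqrt_md_conj d : (sqrt_md d)^* = - sqrt_md d.
Proof.
set s := sqrt_md d.
have [->|s0] := eqVneq s 0; first by rewrite rmorph0 oppr0.
have e : s * s^* = s * (- s).
  rewrite -normCK -normrX expr2 sqrt_md_sq normrN normr_nat.
  by rewrite mulrN sqrt_md_sq opprK.
exact: (mulfI s0 e).
Qed.

Lemma quad_Aint (y : algC) : y + y^* \in Num.int -> y * y^* \in Num.int -> y \in Aint.
Proof.
move=> ht hn.
apply: (@root_monic_Aint (('X - y%:P) * ('X - (y^*)%:P))).
- by rewrite rootM root_XsubC eqxx.
- by rewrite rpredM // monicXsubC.
have -> : ('X - y%:P) * ('X - (y^*)%:P) = 'X^2 - (y + y^*)%:P * 'X + (y * y^*)%:P.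
  rewrite polyCD polyCM; ring.
apply/polyOverP => i; rewrite coefD coefB coefXn coefMX !coefC.
case: i => [|[|[|i]]] /=; rewrite ?subr0 ?sub0r ?add0r ?addr0 ?rpredN ?rpred0 ?rpred1 //.
Qed.

Lemma ratr_conj (a : rat) : (ratr a : algC)^* = ratr a.
Proof. exact/conj_Crat/Crat_rat. Qed.

Section O.
Variable d : nat.
Local Notation s := (sqrt_md d).

Lemma conj_rs (a b : rat) : (ratr a + ratr b * s)^* = ratr a - ratr b * s.
Proof.
have ca : forall c : rat, (ratr c : algC)^* = ratr c by move=> c; exact: conj_Crat (Crat_rat c).
rewrite rmorphD (rmorphM _ (ratr b) s).
rewrite -[LHS]/((ratr a)^* + (ratr b)^* * s^*).
by rewrite !ca sqrt_md_conj mulrN.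
Qed.

Lemma inO_add x y : inO d x -> inO d y -> inO d (x + y).
Proof.
move=> [[a [b ->]] hx] [[a' [b' ->]] hy]; split; last exact: rpredD.
exists (a + a'), (b + b'); rewrite !rmorphD /=; ring.
Qed.

Lemma inO_mul x y : inO d x -> inO d y -> inO d (x * y).
Proof.
move=> [[a [b ->]] hx] [[a' [b' ->]] hy]; split; last exact: rpredM.
exists (a * a' - d%:R * b * b'), (a * b' + b * a').
rewrite !(rmorphD, rmorphN, rmorphM) /= rmorph_nat.
have -> : (ratr a + ratr b * s) * (ratr a' + ratr b' * s) =
  ratr a * ratr a' + ratr b * ratr b' * (s * s) + (ratr a * ratr b' + ratr b * ratr a') * s by ring.
rewrite sqrt_md_sq; ring.
Qed.

Lemma inO_int (k : int) : inO d k%:~R.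
Proof.
split; last exact: Aint_int.
by exists k%:~R, 0; rewrite ratr_int rmorph0 mul0r addr0.
Qed.

Lemma inO_nat (k : nat) : inO d k%:R.
Proof. by have := inO_int k; rewrite pmulrn. Qed.

Lemma inO_s : inO d s.
Proof.
split; first by exists 0, 1; rewrite rmorph0 rmorph1 add0r mul1r.
apply: quad_Aint; rewrite sqrt_md_conj ?subrr ?rpred0 //.
by rewrite mulrN sqrt_md_sq opprK rpred_nat.
Qed.

Lemma inO_conj x : inO d x -> inO d x^*.
Proof.
move=> [[a [b ->]] hx]; split.
  by exists a, (- b); rewrite conj_rs rmorphN mulNr.
move: hx; rewrite -(Aint_aut Num.conj) => h; exact: h.
Qed.

Lemma inO_opp x : inO d x -> inO d (- x).
Proof. by move=> h; rewrite -mulN1r; apply: inO_mul => //; exact: (inO_int (-1)). Qed.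

End O.

Lemma conjD' (u v : algC) : (u + v)^* = u^* + v^*. Proof. exact: rmorphD. Qed.
Lemma conjB' (u v : algC) : (u - v)^* = u^* - v^*. Proof. exact: rmorphB. Qed.
Lemma conjM' (u v : algC) : (u * v)^* = u^* * v^*. Proof. exact: rmorphM. Qed.
Lemma conjV' (u : algC) : (u^-1)^* = (u^*)^-1. Proof. exact: fmorphV. Qed.
Lemma conjN' (u : algC) : (- u)^* = - u^*. Proof. exact: rmorphN. Qed.
Lemma conjz (z : int) : (z%:~R : algC)^* = z%:~R. Proof. exact: rmorph_int. Qed.
Lemma conjn (n : nat) : (n%:R : algC)^* = n%:R. Proof. exact: rmorph_nat. Qed.

Lemma ratrM' (a b : rat) : ratr (a * b) = ratr a * ratr b :> algC. Proof. exact: rmorphM. Qed.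
Lemma ratrD' (a b : rat) : ratr (a + b) = ratr a + ratr b :> algC. Proof. exact: rmorphD. Qed.
Lemma ratrN' (a : rat) : ratr (- a) = - ratr a :> algC. Proof. exact: rmorphN. Qed.
Lemma ratrV' (a : rat) : ratr (a^-1) = (ratr a)^-1 :> algC. Proof. exact: fmorphV. Qed.
Lemma ratrX' (a : rat) n : ratr (a ^+ n) = (ratr a) ^+ n :> algC. Proof. exact: rmorphXn. Qed.
Lemma ratrn (n : nat) : ratr n%:R = n%:R :> algC. Proof. exact: rmorph_nat. Qed.

Section Main.
Variables (d p : nat) (P : algC -> Prop).
Hypotheses (Pid : ideal d P) (P1 : ~ P 1)
  (Pprime : forall a b, inO d a -> inO d b -> P (a * b) -> P a \/ P b)
  (pp : prime p) (Pp : P p%:R) (pd : (p %| d)%N).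
Local Notation s := (sqrt_md d).
Let m := (d %/ p)%N.
Let dE : d = (m * p)%N. Proof. by rewrite /m divnK. Qed.
Let p0 : p%:R != 0 :> algC. Proof. by rewrite pnatr_eq0 -lt0n prime_gt0. Qed.

Let PO x : P x -> inO d x. Proof. by case: Pid => h _ _ _; apply: h. Qed.
Let Padd x y : P x -> P y -> P (x + y). Proof. by case: Pid => _ _ h _; apply: h. Qed.
Let Pmul a x : inO d a -> P x -> P (a * x). Proof. by case: Pid => _ _ _ h; apply: h. Qed.
Let Pneg x : P x -> P (- x).
Proof. by move=> h; rewrite -mulN1r; apply: Pmul => //; exact: (inO_int d (-1)). Qed.

Lemma Pnat_dvd (k : nat) : P k%:R -> (p %| k)%N.
Proof.
move=> Pk; apply: contraT => nd; exfalso.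
have cp : coprime p k by rewrite prime_coprime.
have [a _ hd] := Bezoutl k (prime_gt0 pp).
rewrite (eqP cp) in hd.
set c := ((1 + a * k) %/ p)%N.
have cE : (c * p = 1 + a * k)%N by rewrite divnK.
apply: P1.
have -> : (1 : algC) = c%:R * p%:R + (- (a%:R * k%:R)).
  by rewrite -natrM cE natrD natrM addrK.
apply: Padd; first by apply: Pmul => //; exact: inO_nat.
by apply: Pneg; apply: Pmul => //; exact: inO_nat.
Qed.

Lemma Pint_dvd (z : int) : P z%:~R -> (p %| `|z|)%N.
Proof.
case: z => n.
  by rewrite -pmulrn; apply: Pnat_dvd.
rewrite NegzE mulrNz => h; apply: Pnat_dvd; rewrite -[_%:R]opprK; apply: Pneg.
by rewrite pmulrn.
Qed.

Lemma Pdiv_int w : P w -> w \in Crat -> w \in Aint -> w / p%:R \in Num.int.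
Proof.
move=> Pw wQ wA.
have /intrP [z zE] := Cint_rat_Aint wQ wA.
have : (p%:Z %| z)%Z by have := @Pint_dvd z; rewrite -zE => /(_ Pw).
case/dvdzP => q qE; rewrite qE in zE.
by rewrite zE intrM mulrK ?rpred_int // unitfE.
Qed.

Lemma Ps : P s.
Proof.
have h : P (s * s).
  rewrite sqrt_md_sq dE natrM -mulNr; apply: Pmul => //.
  exact/inO_opp/inO_nat.
by case: (Pprime (inO_s d) (inO_s d) h).
Qed.

Let ss : s * s = - (m%:R * p%:R).
Proof. by rewrite sqrt_md_sq dE natrM. Qed.
Let sc : s * s^* = m%:R * p%:R.
Proof. by rewrite sqrt_md_conj mulrN ss opprK. Qed.

Lemma key x : P x -> inO d (x * s / p%:R).
Proof.
move=> Px; have [[al [be xE]] xA] := PO Px.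
have xcE : x^* = ratr al - ratr be * s by rewrite xE conj_rs.
have sA : s \in Aint := (inO_s d).2.
have scA : s^* \in Aint by rewrite sqrt_md_conj rpredN.
have xcA : x^* \in Aint := (inO_conj (PO Px)).2.
split.
  exists (- (be * (m * p)%:R / p%:R)), (al / p%:R).
  rewrite !(ratrN', ratrM', ratrV', ratrn) natrM.
  apply: (mulIf p0); rewrite !mulrDl !mulNr !divfK //.
  rewrite xE mulrDl -(mulrA (ratr be)) ss; field; exact: p0.
apply: quad_Aint.
  have -> : x * s / p%:R + (x * s / p%:R)^* = (x * s + x^* * s^*) / p%:R.
    by rewrite conjM' conjM' conjV' conjn mulrDl.
  apply: Pdiv_int.
  - apply: Padd; first by rewrite mulrC; apply: Pmul => //; exact: inO_s.
    rewrite sqrt_md_conj mulrN -mulNr; apply: Pmul; last exact: Ps.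
    exact/inO_opp/inO_conj/PO.
  - apply/CratP; exists (- (2 * be * (m * p)%:R)).
    rewrite !(ratrN', ratrM', ratrn) xcE xE sqrt_md_conj natrM.
    have -> : (ratr al + ratr be * s) * s + (ratr al - ratr be * s) * - s =
       ratr be * (s * s) *+ 2 by ring.
    rewrite ss; ring.
  - by rewrite rpredD ?rpredM.
have -> : x * s / p%:R * (x * s / p%:R)^* = (x^* * x) / p%:R * m%:R.
  rewrite conjM' conjM' conjV' conjn.
  have -> : x * s / p%:R * (x^* * s^* / p%:R) = (x^* * x) * (s * s^*) / p%:R / p%:R by ring.
  by rewrite sc; field; exact: p0.
apply: rpredM; last exact: rpred_nat.
apply: Pdiv_int.
- by apply: Pmul => //; exact/inO_conj/PO.
- apply/CratP; exists (al ^+ 2 + be ^+ 2 * (m * p)%:R).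
  rewrite !(ratrD', ratrM', ratrX', ratrn) xcE xE natrM.
  have -> : (ratr al - ratr be * s) * (ratr al + ratr be * s) =
     ratr al ^+ 2 - ratr be ^+ 2 * (s * s) by ring.
  rewrite ss; ring.
- by rewrite rpredM.
Qed.

Definition wv (a b : int) : algC := a%:~R + b%:~R * s / p%:R.

Lemma ww a b : wv a b * (wv a b)^* = (a ^+ 2)%:~R + (b ^+ 2)%:~R * m%:R / p%:R.
Proof.
rewrite /wv conjD' conjM' conjM' conjV' !conjz conjn sqrt_md_conj !intrM.
have -> : (a%:~R + b%:~R * s / p%:R) * (a%:~R + b%:~R * - s / p%:R) =
  a%:~R * a%:~R - b%:~R * b%:~R * (s * s) / p%:R / p%:R :> algC.
  by field; exact: p0.
by rewrite ss; field; exact: p0.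
Qed.

Lemma wO x a b : P x -> inO d (x * wv a b).
Proof.
move=> Px.
have -> : x * wv a b = a%:~R * x + b%:~R * (x * s / p%:R).
  by rewrite /wv; field; exact: p0.
apply: inO_add; apply: inO_mul; try exact: inO_int.
  exact: PO.
exact: key.
Qed.

End Main.

Theorem theorem1 (d p r : nat) (P : algC -> Prop) :
  (0 < d)%N -> squarefree d -> class_number_ge d 4 ->
  prime_ideal d P -> ~ principal_ideal d P ->
  prime p -> P (p%:R) -> (p %| d)%N ->
  (0 < r)%N -> ((p - 1) * d <= p * r)%N ->
  represented_by_I4 d P (r%:R / p%:R).
Proof.
move=> d0 sqf _ [Pid Pnz P1 Pprime] _ pp Pp pd r0 hr.
set m := (d %/ p)%N.
have dE : d = (m * p)%N by rewrite /m divnK.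
have p0 : p%:R != 0 :> algC by rewrite pnatr_eq0 -lt0n prime_gt0.
have cp : coprime p m.
  rewrite prime_coprime //; apply/negP => pm.
  have := sqf p pp; rewrite dE mulnC dvdn_pmul2l ?prime_gt0 // pm //.
have hr' : ((p - 1) * m <= r)%N.
  by rewrite -(leq_pmul2r (prime_gt0 pp)) -mulnA -dE (mulnC r).
have [A [B AB]] := frob (prime_gt0 pp) cp hr'.
have [a1 [a2 [a3 [a4 Ea]]]] := all4 A.
have [b1 [b2 [b3 [b4 Eb]]]] := all4 B.
pose w (i : 'I_4) := nth 0 [:: wv d p a1 b1; wv d p a2 b2; wv d p a3 b3; wv d p a4 b4] i.
have AE : (A%:R : algC) = (a1^+2)%:~R + (a2^+2)%:~R + (a3^+2)%:~R + (a4^+2)%:~R.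
  by rewrite -!intrD !expr2 -Ea pmulrn.
have BE : (B%:R : algC) = (b1^+2)%:~R + (b2^+2)%:~R + (b3^+2)%:~R + (b4^+2)%:~R.
  by rewrite -!intrD !expr2 -Eb pmulrn.
have S : \sum_(i < 4) w i * (w i)^* = r%:R / p%:R.
  rewrite !big_ord_recr big_ord0 /= /w /= !(ww pp pd) -/m.
  have -> : (r%:R : algC) = p%:R * A%:R + m%:R * B%:R by rewrite -AB natrD !natrM.
  rewrite AE BE; field; exact: p0.
have rp0 : r%:R / p%:R != 0 :> algC.
  by rewrite mulf_neq0 ?invr_eq0 // pnatr_eq0 -lt0n.
exists (fun x i => x * w i); split.
- move=> x Px i; rewrite /w; case: i => [[|[|[|[|//]]]] ?] /=; exact: (wO Pid P1 Pprime pp Pp pd).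
- by move=> a b x y _ _ _ _ i; rewrite mulrDl !mulrA.
- move=> x y _ _ H; apply: (mulIf rp0); rewrite -S !mulr_sumr.
  by apply: eq_bigr => i _; rewrite mulrA H mulrA.
- move=> x y _ _; rewrite -S mulr_sumr; apply: eq_bigr => i _.
  by rewrite conjM'; ring.
Qed.
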